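(* Let $q\ge2$ be a fixed even integer. For every $n$ there exists a code $\mathcal{C}\subseteq\Sigma_q^n$ capable of correcting a reverse-complement duplication of arbitrary length (i.e. $RC_k^1(\boldsymbol{x})\cap RC_k^1(\boldsymbol{z})=\varnothing$ for all distinct $\boldsymbol{x},\boldsymbol{z}\in\mathcal{C}$ and all $k\ge1$) with redundancy $n-\log_q|\mathcal{C}|\le 2\log_q n+\log_q\log_q n+O(1)$; in particular the asymptotic rate $\log_q|\mathcal{C}|/n$ tends to $1$.
   Context: $\Sigma_q=\{0,\dots,q-1\}$. A complement operation is a fixed bijection $a\mapsto\overline{a}$ on $\Sigma_q$ with $\overline{a}\ne a$, $\overline{\overline{a}}=a$; $\boldsymbol{v}^{RC}=\overline{v_k}\cdots\overline{v_1}$ for $\boldsymbol{v}=v_1\cdots v_k$. For $\boldsymbol{x}=\boldsymbol{u}\boldsymbol{v}\boldsymbol{w}\in\Sigma_q^n$ with $|\boldsymbol{u}|=i-1$, $|\boldsymbol{v}|=k$, $RC_{k,i}(\boldsymbol{x})=\boldsymbol{u}\boldsymbol{v}\boldsymbol{v}^{RC}\boldsymbol{w}$, and $RC_k^1(\boldsymbol{x})=\{RC_{k,i}(\boldsymbol{x}):i\in[1,n-k+1]\}$ (empty if $k>n$). The $O(1)$ term depends only on $q$. *)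

(* Defs.v *)
From Stdlib Require Import Reals.
From mathcomp Require Import all_boot.
Set Implicit Arguments. Unset Strict Implicit. Unset Printing Implicit Defensive.

Definition is_complement (q : nat) (comp : 'I_q -> 'I_q) : Prop :=
  (forall a, comp a != a) /\ (forall a, comp (comp a) = a).

Definition revcomp (q : nat) (comp : 'I_q -> 'I_q) (v : seq 'I_q) : seq 'I_q :=
  rev (map comp v).

(* RC_{k,i}(x) with 0-based start position j = i - 1:
   x = u v w, |u| = j, |v| = k  |->  u v v^{RC} w. *)
Definition rc_dup (q : nat) (comp : 'I_q -> 'I_q) (k j : nat) (x : seq 'I_q)
  : seq 'I_q :=
  let u := take j x in
  let v := take k (drop j x) in
  let w := drop (j + k) x in
  u ++ v ++ revcomp comp v ++ w.

Definition in_RC1 (q : nat) (comp : 'I_q -> 'I_q) (k : nat) (x y : seq 'I_q)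
  : Prop :=
  exists j : nat, j + k <= size x /\ y = rc_dup comp k j x.

Definition rc_correcting (q n : nat) (comp : 'I_q -> 'I_q)
  (C : {set n.-tuple 'I_q}) : Prop :=
  forall x z : n.-tuple 'I_q, x \in C -> z \in C -> x != z ->
  forall k : nat, 1 <= k ->
  forall y : seq 'I_q, ~ (in_RC1 comp k x y /\ in_RC1 comp k z y).

Definition logq (q : nat) (x : R) : R := Rdiv (ln x) (ln (INR q)).

(* Main.v *)
Require Import Defs.
From Stdlib Require Import Reals.
From mathcomp Require Import all_boot.
From Stdlib Require Import Lia Lra.
From mathcomp Require Import zify.
Set Implicit Arguments. Unset Strict Implicit. Unset Printing Implicit Defensive.

Section Comb.
Variables (q : nat) (comp : 'I_q -> 'I_q) (a0 : 'I_q).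

Definition pal (y : seq 'I_q) (c k : nat) : bool :=
  all (fun i => nth a0 y (c + i) == comp (nth a0 y (c - i.+1))) (iota 0 k).

Lemma rc_dupE k j (x : seq 'I_q) : j + k <= size x ->
  rc_dup comp k j x = take (j + k) x ++ revcomp comp (take k (drop j x)) ++ drop (j + k) x.
Proof.
move=> h; rewrite /rc_dup catA; congr (_ ++ _).
by rewrite takeD.
Qed.

Lemma size_rc k j (x : seq 'I_q) : j + k <= size x -> size (rc_dup comp k j x) = size x + k.
Proof.
move=> h; rewrite rc_dupE // !size_cat /revcomp size_rev size_map size_drop !size_takel ?size_drop; lia.
Qed.

Lemma decode_rc k j (x : seq 'I_q) : j + k <= size x ->
  take (j + k) (rc_dup comp k j x) ++ drop (j + k + k) (rc_dup comp k j x) = x.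
Proof.
move=> h; rewrite rc_dupE //.
have hs : size (take (j + k) x) = j + k by rewrite size_take; case: ltnP => //; lia.
have hr : size (revcomp comp (take k (drop j x))) = k.
  rewrite /revcomp size_rev size_map size_take size_drop; case: ltnP => //; lia.
rewrite take_size_cat // -addnA drop_cat hs (_ : (j + (k + k) < j + k) = false); last lia.
rewrite (_ : j + (k + k) - (j + k) = k); last lia.
by rewrite drop_size_cat // cat_take_drop.
Qed.

Lemma pal_rc k j (x : seq 'I_q) : j + k <= size x -> pal (rc_dup comp k j x) (j + k) k.
Proof.
move=> h; rewrite rc_dupE //; apply/allP => i; rewrite mem_iota add0n => /andP [_ hi].
have hs : size (take (j + k) x) = j + k by rewrite size_take; case: ltnP => //; lia.
have hr : size (revcomp comp (take k (drop j x))) = k.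
  rewrite /revcomp size_rev size_map size_take size_drop; case: ltnP => //; lia.
rewrite nth_cat hs ltnNge leq_addr /= addKn nth_cat hr hi.
rewrite nth_cat hs (_ : j + k - i.+1 < j + k); last by lia.
have hk : size (take k (drop j x)) = k by rewrite size_takel ?size_drop //; lia.
rewrite /revcomp nth_rev; last by rewrite size_map hk.
rewrite (nth_map a0); last by rewrite ?size_map hk; lia.
rewrite size_map hk.
rewrite nth_take ?nth_drop; last lia.
rewrite nth_take; last lia.
by rewrite (_ : j + (k - i.+1) = j + k - i.+1) //; lia.
Qed.


Lemma pal_at y c k i : pal y c k -> i < k -> nth a0 y (c + i) = comp (nth a0 y (c - i.+1)).
Proof. by move=> /allP /(_ i) h hi; apply/eqP/h; rewrite mem_iota. Qed.

Definition Fk c1 c2 k (y : seq 'I_q) := take c1 y ++ drop (c1 + k) (take c2 y) ++ drop (c2 + k) y.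

Lemma determ (y y' : seq 'I_q) a b k : 0 < k -> k <= a -> k <= b -> a != b ->
  size y = size y' -> pal y a k -> pal y b k -> pal y' a k -> pal y' b k ->
  Fk (minn a b) (maxn a b) k y = Fk (minn a b) (maxn a b) k y' -> y = y'.
Proof.
move=> k0 ka kb ab hs pa pb pa' pb'.
set c1 := minn a b; set c2 := maxn a b.
have [P1 P2 P1' P2'] : [/\ pal y c1 k, pal y c2 k, pal y' c1 k & pal y' c2 k].
  by rewrite /c1 /c2; case: leqP.
have c1p : 0 < c1 by rewrite /c1; lia.
have c12 : c1 < c2 by rewrite /c1 /c2; move: ab; case: ltngtP => //; lia.
move=> /eqP; rewrite /Fk eqseq_cat; last by rewrite !size_take hs.
case/andP => /eqP E1; rewrite eqseq_cat; last by rewrite !size_drop !size_take hs.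
case/andP => /eqP E2 /eqP E3.
suff H : forall p, nth a0 y p = nth a0 y' p by apply: (eq_from_nth (x0 := a0)).
elim/ltn_ind => p IH.
case: (ltnP p c1) => h1; first by rewrite -(nth_take a0 h1) E1 nth_take.
case: (ltnP p (c1 + k)) => h2.
  have -> : p = c1 + (p - c1) by lia.
  rewrite (pal_at P1) ?(pal_at P1') ?IH //; lia.
case: (ltnP p c2) => h3.
  have e z : nth a0 z p = nth a0 (drop (c1 + k) (take c2 z)) (p - (c1 + k)).
    by rewrite nth_drop nth_take subnKC //; lia.
  by rewrite !e E2.
case: (ltnP p (c2 + k)) => h4.
  have -> : p = c2 + (p - c2) by lia.
  rewrite (pal_at P2) ?(pal_at P2') ?IH //; lia.
have -> : p = c2 + k + (p - (c2 + k)) by lia.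
by rewrite -!nth_drop E3.
Qed.

Lemma count_good n k j j' : 0 < k -> j + k <= n -> j' + k <= n -> j != j' ->
  #|[set x : n.-tuple 'I_q | pal (rc_dup comp k j x) (j' + k) k]|
    <= q ^ (n - k) + q ^ (n - ((j - j') + (j' - j))).
Proof.
move=> k0 hj hj' jj.
have q0 : 0 < q by apply: (leq_ltn_trans (leq0n a0) (ltn_ord a0)).
set c1 := minn (j + k) (j' + k); set c2 := maxn (j + k) (j' + k).
set L := c1 + (c2 - (c1 + k)) + (n + k - (c2 + k)).
have sizeF : forall x : n.-tuple 'I_q, size (Fk c1 c2 k (rc_dup comp k j x)) = L.
  move=> x; have hx : j + k <= size x by rewrite size_tuple.
  rewrite /Fk !size_cat size_drop size_takel; last by rewrite size_rc // size_tuple /c1; lia.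
  rewrite size_drop size_takel; last by rewrite size_rc // size_tuple /c2; lia.
  rewrite size_rc // size_tuple /L; lia.
pose G (x : n.-tuple 'I_q) : L.-tuple 'I_q := insubd (nseq_tuple L a0) (Fk c1 c2 k (rc_dup comp k j x)).
have valG x : val (G x) = Fk c1 c2 k (rc_dup comp k j x) by rewrite val_insubd sizeF eqxx.
rewrite -(card_in_imset (f := G)); last first.
  move=> x x'; rewrite !inE => px px' /(congr1 val); rewrite !valG => hF.
  have hx : j + k <= size x by rewrite size_tuple.
  have hx' : j + k <= size x' by rewrite size_tuple.
  have jk : j + k != j' + k by rewrite eqn_add2r.
  have := determ k0 (leq_addl _ _) (leq_addl _ _) jk _ (pal_rc hx) px (pal_rc hx') px' hF.
  rewrite !size_rc // !size_tuple => /(_ erefl) hy.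
  by apply: val_inj; rewrite /= -(decode_rc hx) -(decode_rc hx') hy.
apply: (leq_trans (max_card _)); rewrite card_tuple card_ord.
have [hL|hL] : L <= n - k \/ L <= n - ((j - j') + (j' - j)) by rewrite /L /c1 /c2; lia.
  by apply: (leq_trans (leq_pexp2l q0 hL)); apply: leq_addr.
by apply: (leq_trans (leq_pexp2l q0 hL)); apply: leq_addl.
Qed.

End Comb.
Lemma dbl_exp q a : 2 <= q -> q ^ a + q ^ a <= q ^ a.+1.
Proof. by move=> h; rewrite expnS addnn -mul2n leq_mul2r h orbT. Qed.

Lemma geoL_aux q n j : 2 <= q -> j <= n -> forall M,
  \sum_(i < M) (i < j) * q ^ (n - (j - i)) + q ^ (n - j) <= q ^ (n - (j - minn M j)).
Proof.
move=> q2 jn; elim=> [|M IH]; first by rewrite big_ord0 min0n subn0.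
rewrite big_ord_recr /=.
case: (ltnP M j) => hM.
  rewrite mul1n -addnA (addnC (q ^ _)) addnA.
  apply: (leq_trans (leq_add IH (leqnn _))).
  rewrite (minn_idPl (ltnW hM)) (minn_idPl hM).
  have -> : n - (j - M.+1) = (n - (j - M)).+1 by lia.
  exact: dbl_exp.
rewrite mul0n addn0; apply: (leq_trans IH).
by rewrite (minn_idPr hM) (minn_idPr (leqW hM)).
Qed.

Lemma geoL q n j M : 2 <= q -> j <= n -> \sum_(i < M) (i < j) * q ^ (n - (j - i)) <= q ^ n.
Proof.
move=> q2 jn; apply: (leq_trans (leq_addr (q ^ (n - j)) _)).
apply: (leq_trans (geoL_aux q2 jn M)); apply: leq_pexp2l; lia.
Qed.

Lemma geoR_aux q n j : 2 <= q -> j <= n -> forall M, M <= n.+1 ->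
  \sum_(i < M) (j < i) * q ^ (n - (i - j)) + q ^ (n - (M - j.+1)) <= q ^ n.
Proof.
move=> q2 jn; elim=> [|M IH] hM; first by rewrite big_ord0 sub0n subn0.
rewrite big_ord_recr /=.
case: (ltnP j M) => hj.
  rewrite mul1n -addnA.
  apply: (leq_trans _ (IH (ltnW hM))); rewrite leq_add2l.
  have -> : n - (M - j.+1) = (n - (M - j)).+1 by lia.
  have -> : n - (M.+1 - j.+1) = n - (M - j) by lia.
  exact: dbl_exp.
rewrite mul0n addn0; apply: (leq_trans _ (IH (ltnW hM))).
by have -> : M.+1 - j.+1 = M - j.+1 by lia.
Qed.

Lemma geoR q n j : 2 <= q -> j <= n -> \sum_(i < n.+1) (j < i) * q ^ (n - (i - j)) <= q ^ n.
Proof.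
move=> q2 jn; apply: (leq_trans (leq_addr (q ^ (n - (n.+1 - j.+1))) _)).
exact: geoR_aux.
Qed.

Lemma geoD q n j : 2 <= q -> j <= n ->
  \sum_(i < n.+1) (j != i) * q ^ (n - ((j - i) + (i - j))) <= 2 * q ^ n.
Proof.
move=> q2 jn.
rewrite (eq_bigr (fun i : 'I_n.+1 => (i < j) * q ^ (n - (j - i)) + (j < i) * q ^ (n - (i - j)))).
  by rewrite big_split /= mul2n -addnn leq_add ?geoL ?geoR.
move=> i _; case: (ltngtP i j) => h /=.
- by rewrite mul1n mul0n addn0 (_ : i - j = 0) ?addn0 //; lia.
- by rewrite mul1n mul0n add0n (_ : j - i = 0) ?add0n //; lia.
- by rewrite !mul0n.
Qed.
Lemma greedy (T : finType) (r : rel T) (D : nat) :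
  (forall x y, r x y -> r y x) -> (forall x, ~~ r x x) ->
  forall S : {set T}, (forall x, x \in S -> #|[set y in S | r x y]| <= D) ->
  exists I : {set T}, [/\ I \subset S, (forall x y, x \in I -> y \in I -> ~~ r x y)
                         & #|S| <= #|I| * D.+1].
Proof.
move=> sym irr S; move: {2}#|S| (leqnn #|S|) => m; elim: m S => [|m IH] S hS hdeg.
  exists set0; rewrite sub0set cards0; split => // x y; by rewrite inE.
case: (set_0Vmem S) => [->|[v vS]].
  exists set0; rewrite sub0set !cards0; split => // x y; by rewrite inE.
set N := v |: [set y in S | r v y]; set S' := S :\: N.
have vS' : v \notin S' by rewrite !inE eqxx.
have hS' : #|S'| <= m.
  have : #|S'| < #|S|.
    apply: proper_card; rewrite properE subDset subsetU ?subxx ?orbT //=.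
    apply/subsetPn; exists v => //.
  by move=> h; rewrite -ltnS (leq_trans h hS).
have hdeg' : forall x, x \in S' -> #|[set y in S' | r x y]| <= D.
  move=> x xS; apply: leq_trans (hdeg x _); last by move: xS; rewrite inE => /andP [].
  by apply: subset_leq_card; apply/subsetP => y; rewrite !inE => /andP [/andP [_ ->] ->].
have [I' [IS ind cI]] := IH S' hS' hdeg'.
have vI : v \notin I' by apply: contra vS'; apply: (subsetP IS).
exists (v |: I'); split.
- by rewrite subUset sub1set vS (subset_trans IS) // subDset subsetU ?subxx ?orbT.
- have nvS y : y \in I' -> ~~ r v y.
    move=> /(subsetP IS); rewrite !inE => /andP [] /norP [_] /negP h yS.
    by apply/negP => hv; apply: h; rewrite yS hv.
  move=> x y; rewrite !inE => /orP [/eqP -> | xI] /orP [/eqP -> | yI].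
  + exact: irr.
  + exact: nvS.
  + by apply/negP => /sym; apply/negP; apply: nvS.
  + exact: ind.
- rewrite cardsU1 vI add1n mulSn.
  have e := cardsID N S.
  have : #|S :&: N| <= D.+1.
    apply: (leq_trans (subset_leq_card (subsetIr _ _))).
    have := hdeg v vS; rewrite /N cardsU1; case: (v \notin _) => /= h; lia.
  rewrite -/S' in e; lia.
Qed.

Section Main.
Variables (q : nat) (comp : 'I_q -> 'I_q) (a0 : 'I_q) (n : nat).
Hypothesis q2 : 2 <= q.

Definition T3 := ('I_n.+1 * ('I_n.+1 * 'I_n.+1))%type.

Definition good (t : T3) (x : n.-tuple 'I_q) : bool :=
  [&& 0 < t.1, t.2.1 + t.1 <= n, t.2.2 + t.1 <= n, t.2.1 != t.2.2 :> nat &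
      pal comp a0 (rc_dup comp t.1 t.2.1 x) (t.2.2 + t.1) t.1].

Definition conf (x z : n.-tuple 'I_q) : bool :=
  (x != z) && [exists t : T3, [&& 0 < t.1, t.2.1 + t.1 <= n, t.2.2 + t.1 <= n &
      rc_dup comp t.1 t.2.1 x == rc_dup comp t.1 t.2.2 z]].

Definition tdeg x := #|[set t | good t x]|.

Lemma conf_sym x z : conf x z -> conf z x.
Proof.
case/andP => xz /existsP [[k [j j']] /and4P [h1 h2 h3 /eqP h4]].
rewrite /conf eq_sym xz; apply/existsP; exists (k, (j', j)) => /=.
by rewrite h1 h2 h3 h4 eqxx.
Qed.

Lemma conf_irr x : ~~ conf x x.
Proof. by rewrite /conf eqxx. Qed.

Lemma nbr_le x : #|[set z | conf x z]| <= tdeg x.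
Proof.
pose H (t : T3) : n.-tuple 'I_q :=
  insubd x (take (t.2.2 + t.1) (rc_dup comp t.1 t.2.1 x) ++
            drop (t.2.2 + t.1 + t.1) (rc_dup comp t.1 t.2.1 x)).
apply: leq_trans (leq_imset_card H _); apply: subset_leq_card; apply/subsetP => z.
rewrite inE => /andP [xz /existsP [[k [j j']] /and4P [h1 h2 h3 /eqP E]]] /=.
simpl in *.
have hx : j + k <= size x by rewrite size_tuple.
have hz : j' + k <= size z by rewrite size_tuple.
apply/imsetP; exists (k, (j, j')).
  rewrite inE /good /= h1 h2 h3 E (pal_rc comp a0) // andbT.
  apply/negP => /eqP ejj; move: xz; rewrite (_ : x = z) ?eqxx //.
  by apply: val_inj; rewrite /= -(decode_rc comp hx) -(decode_rc comp hz) E ejj.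
apply: val_inj; rewrite /H val_insubd /= E (decode_rc comp hz) size_tuple eqxx.
by [].
Qed.

Lemma card_sum (T : finType) (P : pred T) : #|[set t | P t]| = \sum_t P t.
Proof. by rewrite -sum1dep_card big_mkcond; apply: eq_bigr => t _; case: (P t). Qed.

Lemma good_bound (t : T3) :
  #|[set x | good t x]| <= (0 < t.1) * q ^ (n - t.1)
     + (t.2.1 != t.2.2 :> nat) * q ^ (n - ((t.2.1 - t.2.2) + (t.2.2 - t.2.1))).
Proof.
case: t => [k [j j']] /=.
case hc: [&& 0 < k, j + k <= n, j' + k <= n & j != j' :> nat].
  case/and4P: hc => h1 h2 h3 h4; rewrite h1 h4 !mul1n.
  apply: leq_trans (count_good comp a0 h1 h2 h3 h4).
  by apply: subset_leq_card; apply/subsetP => x; rewrite !inE /good /= => /and5P [].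
rewrite (_ : [set x | good (k, (j, j')) x] = set0) ?cards0 //.
apply/setP => x; rewrite !inE /good /=; apply/negP => /and5P [h1 h2 h3 h4 _].
by move: hc; rewrite h1 h2 h3 h4.
Qed.

Lemma sum_tdeg : \sum_x tdeg x <= 3 * (n.+1 * n.+1) * q ^ n.
Proof.
rewrite /tdeg; under eq_bigr do rewrite card_sum.
rewrite exchange_big /=.
under eq_bigr => t _ do rewrite -(card_sum (fun x => good t x)).
apply: leq_trans; first by apply: leq_sum => t _; apply: good_bound.
pose B (k j j' : 'I_n.+1) := (0 < (k : nat)) * q ^ (n - k)
     + ((j : nat) != j' :> nat) * q ^ (n - ((j - j') + (j' - j))).
have -> : \sum_(t : T3) ((0 < t.1) * q ^ (n - t.1)
     + (t.2.1 != t.2.2 :> nat) * q ^ (n - ((t.2.1 - t.2.2) + (t.2.2 - t.2.1))))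
   = \sum_k \sum_j \sum_j' B k j j'.
  by under [RHS]eq_bigr do rewrite pair_bigA; rewrite pair_bigA.
rewrite /B.
apply: (leq_trans (n := \sum_(k < n.+1) \sum_(j < n.+1) (n.+1 * ((0 < (k : nat)) * q ^ (n - k)) + 2 * q ^ n))).
  apply: leq_sum => k _; apply: leq_sum => j _.
  rewrite big_split /= sum_nat_const card_ord leq_add2l.
  by apply: geoD => //; rewrite -ltnS.
under eq_bigr do rewrite sum_nat_const card_ord mulnDr.
rewrite big_split /= -big_distrr -big_distrr /= sum_nat_const card_ord.
have g := geoR q2 (leq0n n).
have : \sum_(i < n.+1) (0 < (i : nat)) * q ^ (n - i) <= q ^ n.
  by apply: leq_trans g; apply: leq_sum => i _; rewrite subn0.
move=> g2.
have := leq_mul (leqnn (n.+1 * n.+1)) g2.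
set S := \sum_(i < n.+1) _; set Q := q ^ n; move=> h; rewrite !mulnA; nia.
Qed.

End Main.

Lemma exists_code (q n : nat) (comp : 'I_q -> 'I_q) : 2 <= q -> 0 < n ->
  exists C : {set n.-tuple 'I_q}, rc_correcting comp C /\ q ^ n <= 50 * (n * n) * #|C|.
Proof.
move=> q2 n0.
have a0 : 'I_q by exists 0; lia.
set D := 6 * (n.+1 * n.+1).
set S := [set x : n.-tuple 'I_q | tdeg comp a0 x <= D].
have hbad : #|~: S| * D.+1 <= 3 * (n.+1 * n.+1) * q ^ n.
  apply: leq_trans (sum_tdeg comp a0 n q2).
  apply: (@leq_trans (\sum_(x in ~: S) tdeg comp a0 x)).
    by rewrite -sum_nat_const; apply: leq_sum => x; rewrite !inE -ltnNge.
  by rewrite [X in _ <= X](bigID (fun x => x \in ~: S)) /= leq_addr.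
have hS : #|S| + #|~: S| = q ^ n by rewrite cardsC card_tuple card_ord.
have hS2 : q ^ n <= 2 * #|S| by rewrite /D in hbad; nia.
have hdeg : forall x, x \in S -> #|[set y in S | conf comp x y]| <= D.
  move=> x xS; apply: (leq_trans _ (leq_trans (nbr_le comp a0 x) _)); last by move: xS; rewrite inE.
  by apply: subset_leq_card; apply/subsetP => y; rewrite !inE => /andP [].
have [I [IS ind cI]] := greedy (@conf_sym q comp n) (@conf_irr q comp n) hdeg.
exists I; split.
  2: { have h : 2 * D.+1 <= 50 * (n * n) by rewrite /D; nia.
       apply: (leq_trans hS2); apply: (leq_trans (leq_mul (leqnn 2) cI)).
       rewrite mulnCA mulnC; exact: leq_mul. }
move=> x z xI zI xz k k1 y [[j [hj ->]] [j' [hj' E]]].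
have /negP := ind x z xI zI; apply; rewrite /conf xz /=.
rewrite !size_tuple in hj hj'.
have ok : k < n.+1 by lia.
have oj : j < n.+1 by lia.
have oj' : j' < n.+1 by lia.
apply/existsP; exists (Ordinal ok, (Ordinal oj, Ordinal oj')).
by rewrite /= k1 hj hj' E eqxx.
Qed.

Lemma ln_le' (x y : R) : (Rlt (0) (x)) -> (Rle (x) (y)) -> (Rle (ln x) (ln y)).
Proof.
move=> hx /Rle_lt_or_eq_dec [h|<-]; last by apply: Rle_refl.
by apply: Rlt_le; apply: ln_increasing.
Qed.

Lemma INR_expn (a m : nat) : INR (a ^ m) = Rpow_def.pow (INR a) m.
Proof. elim: m => [|m IH] //=; by rewrite expnS mult_INR IH. Qed.

Theorem theorem3 (q : nat) (Hq2 : 2 <= q) (Hqeven : ~~ odd q) :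
  exists c : R,
  forall comp : 'I_q -> 'I_q, is_complement comp ->
  forall n : nat, 2 <= n ->
  exists C : {set n.-tuple 'I_q},
    rc_correcting comp C /\
    Rle (Rminus (INR n) (logq q (INR #|C|)))
        (Rplus (Rplus (Rmult 2 (logq q (INR n))) (logq q (logq q (INR n)))) c).
Proof.
have q1 : Rlt 1 (INR q).
  have := le_INR _ _ (elimT leP Hq2); rewrite /= => h; lra.
set L := ln (INR q).
have Lpos : (Rlt (0) (L)) by rewrite -ln_1; apply: ln_increasing => //; lra.
exists (Rminus (logq q 50) (logq q (logq q 2))).
move=> comp _ n hn.
have n0 : 0 < n by apply: leq_trans hn.
have [C [hC hc]] := exists_code comp Hq2 n0.
exists C; split => //.
have Cpos : 0 < #|C|.
  have h0 : 0 < q ^ n by rewrite expn_gt0 (leq_trans _ Hq2).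
  move: hc; case: #|C| => // ; rewrite muln0; lia.
have hc' := le_INR _ _ (elimT leP hc); rewrite !mult_INR INR_expn in hc'.
have Kpos : (Rlt (0) (INR #|C|)) by apply: lt_0_INR; apply/ltP.
have N2 : (Rle (2) (INR n)) by have := le_INR _ _ (elimT leP hn); rewrite /=; lra.
have Npos : (Rlt (0) (INR n)) by lra.
have hl := ln_le' (pow_lt _ n (Rlt_trans _ _ _ Rlt_0_1 q1)) hc'.
rewrite ln_pow in hl; last lra.
have e50 : INR 50 = IZR 50 by rewrite INR_IZR_INZ.
rewrite e50 in hl.
have p50 : Rlt 0 (IZR 50) by apply: IZR_lt.
have pNN : Rlt 0 (INR n * INR n) by apply: Rmult_lt_0_compat.
rewrite (ln_mult (IZR 50 * (INR n * INR n)) (INR #|C|)) in hl; last by [].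
  2: by apply: Rmult_lt_0_compat.
rewrite (ln_mult (IZR 50) (INR n * INR n)) // (ln_mult (INR n) (INR n)) // in hl.
have ln2 : (Rlt (0) (ln 2)) by have := ln_lt_2; lra.
have lnN : (Rle (ln 2) (ln (INR n))) by apply: ln_le'; lra.
have iL : (Rlt (0) (/ L)) by apply: Rinv_0_lt_compat.
have l2 : (Rlt (0) (ln 2 / L)) by apply: Rmult_lt_0_compat.
have hll : (Rle (ln (ln 2 / L)) (ln (ln (INR n) / L))).
  apply: ln_le' => //; apply: Rmult_le_compat_r; lra.
rewrite /logq -/L.
rewrite /Rdiv in hll l2 *.
set X := Rinv L in iL hll l2 *.
set a := ln (INR #|C|) in hl *.
set c := ln (INR n) in hl *.
set d := ln (c * X) in hll *.
set e := ln (ln 2 * X) in hll *.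
set b := ln (IZR 50) in hl *.
have h1 : Rle (INR n) ((b + (c + c) + a) * X).
  have -> : INR n = Rmult (Rmult (INR n) L) X by rewrite /X; field; lra.
  by rewrite -/L in hl; apply: Rmult_le_compat_r; lra.
have h2 : Rle (e * X) (d * X) by apply: Rmult_le_compat_r; lra.
lra.
Qed.
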